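(* Let $n\ge1$. Let $\mathbf{R}$ be a subalgebra of $\mathbf{P\L}_n\times\mathbf{P\L}_n$ with $\mathbf{R}\subseteq{\le}$. Assume $\mathbf{R}$ is not the diagonal $\{(s,s):s\in S\}$ of any subalgebra $\mathbf{S}$ of $\mathbf{P\L}_n$. Put $\mathbf{S}=\mathrm{pr}_1(\mathbf{R})\times\mathrm{pr}_2(\mathbf{R})$. If $(x,y)\in\mathbf{R}$, then $C_{(x,y),\mathbf{S}}\subseteq\mathbf{R}$.
   Context: For $n\ge 1$, the algebra $\mathbf{P\L}_n=\langle\{0,\tfrac1n,\dots,\tfrac{n-1}{n},1\},\wedge,\vee,\odot,\oplus,0,1\rangle$ has $\wedge=\min$, $\vee=\max$, $x\odot y=\max\{0,x+y-1\}$ and $x\oplus y=\min\{1,x+y\}$. The order is ${\le}=\{(x,y): x\le y\}\subseteq\mathbf{P\L}_n^2$. Let $\mathbf{S}=\mathbf{S}_1\times\mathbf{S}_2$ be a product of subalgebras of $\mathbf{P\L}_n$, and let $(x,y)\in\mathbf{S}$ with $x\le y$. Define $$C_{(x,y),\mathbf{S}}=\{(x',y')\in \mathbf{S}: x'\le x\text{ and }y\le y'\}.$$ *)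

(* Defs.v *)
From mathcomp Require Import all_boot all_order all_algebra.
Set Implicit Arguments. Unset Strict Implicit. Unset Printing Implicit Defensive.
Import Order.TTheory GRing.Theory Num.Theory.
Local Open Scope ring_scope.

Definition PL (n : nat) (x : rat) : Prop :=
  exists k : nat, (k <= n)%N /\ x = k%:R / n%:R.

Definition lmeet (x y : rat) : rat := Num.min x y.
Definition ljoin (x y : rat) : rat := Num.max x y.
Definition lodot (x y : rat) : rat := Num.max 0 (x + y - 1).
Definition loplus (x y : rat) : rat := Num.min 1 (x + y).

Definition subalg (n : nat) (S : rat -> Prop) : Prop :=
  [/\ (forall x, S x -> PL n x), S 0, S 1 &
      forall x y, S x -> S y ->
        [/\ S (lmeet x y), S (ljoin x y), S (lodot x y) & S (loplus x y)]].

Definition subalg2 (n : nat) (R : rat -> rat -> Prop) : Prop :=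
  [/\ (forall x y, R x y -> PL n x /\ PL n y), R 0 0, R 1 1 &
      forall x1 y1 x2 y2, R x1 y1 -> R x2 y2 ->
        [/\ R (lmeet x1 x2) (lmeet y1 y2), R (ljoin x1 x2) (ljoin y1 y2),
            R (lodot x1 x2) (lodot y1 y2) & R (loplus x1 x2) (loplus y1 y2)]].

Definition pr1 (R : rat -> rat -> Prop) (x : rat) : Prop := exists y, R x y.
Definition pr2 (R : rat -> rat -> Prop) (y : rat) : Prop := exists x, R x y.

Definition is_diagonal (R : rat -> rat -> Prop) (S : rat -> Prop) : Prop :=
  forall x y, R x y <-> (S x /\ x = y).

(* C_{(x,y),S} for S = S1 x S2. *)
Definition Cset (S1 S2 : rat -> Prop) (x y : rat) (x' y' : rat) : Prop :=
  [/\ S1 x', S2 y', x' <= x & y <= y'].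

(* Main.v *)
Require Import Defs.
From mathcomp Require Import all_boot all_order all_algebra.
From mathcomp Require Import lra zify.
From Stdlib Require Import Classical.
Import Order.TTheory GRing.Theory Num.Theory.
Local Open Scope ring_scope.

Lemma grid_oplus (n k : nat) : (0 < n)%N ->
  loplus (k%:R / n%:R) (k%:R / n%:R) = (minn n (k + k))%:R / n%:R.
Proof.
move=> n0; have N0 : (0:rat) < n%:R by rewrite ltr0n.
rewrite /loplus -mulrDl -natrD.
case: (leqP n (k+k)) => h.
  rewrite divff ?gt_eqF //; apply/min_idPl.
  by rewrite ler_pdivlMr // mul1r ler_nat.
apply/min_idPr.
by rewrite ler_pdivrMr // mul1r ler_nat ltnW.
Qed.

Lemma grid_odot (n k : nat) : (0 < n)%N ->
  lodot (k%:R / n%:R) (k%:R / n%:R) = ((k + k) - n)%N%:R / n%:R.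
Proof.
move=> n0; have N0 : (0:rat) < n%:R by rewrite ltr0n.
rewrite /lodot -mulrDl -natrD.
case: (leqP n (k+k)) => h.
  rewrite natrB // mulrBl divff ?gt_eqF //; apply/max_idPr.
  by rewrite subr_ge0 ler_pdivlMr // mul1r ler_nat.
have -> : (k + k - n)%N = 0%N by apply/eqP; rewrite subn_eq0 ltnW.
rewrite mul0r; apply/max_idPl.
rewrite subr_le0 ler_pdivrMr // mul1r ler_nat ltnW //.
Qed.

Lemma key (n : nat) (R : rat -> rat -> Prop) : (0 < n)%N -> subalg2 n R ->
  forall m k l, ((if k == 0%N then 0%N else n) + (n - (l - k)) <= m)%N ->
  (k < l <= n)%N -> R (k%:R / n%:R) (l%:R / n%:R) -> R 0 1.
Proof.
move=> n0 [_ _ _ Rops]; have N0 : (0:rat) < n%:R by rewrite ltr0n.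
elim=> [|m IH] k l hmu hkl hR.
  move: hmu; case: (k =P 0%N) => [k0|/eqP k0] hmu; last by lia.
  have ln : l = n by lia.
  by move: hR; rewrite k0 ln mul0r divff ?gt_eqF.
case: (Rops _ _ _ _ hR hR) => _ _ Rod Rop.
rewrite !grid_oplus // in Rop; rewrite !grid_odot // in Rod.
case: (k =P 0%N) => [k0|/eqP k0].
  case: (l =P n) => [ln|/eqP ln].
    by move: hR; rewrite k0 ln mul0r divff ?gt_eqF.
  apply: (IH _ _ _ _ Rop); move: hmu; rewrite k0 /=.
    have -> : minn n (0 + 0) = 0%N by lia.
    by move=> hmu; lia.
  by lia.
case: (leqP (l + l) n) => hl.
  apply: (IH _ _ _ _ Rop); last by lia.
  have -> : minn n (k + k) = (k + k)%N by lia.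
  have -> : (k + k == 0)%N = false by lia.
  by move: hmu; rewrite (negbTE k0); lia.
apply: (IH _ _ _ _ Rod); last by lia.
move: hmu; rewrite (negbTE k0).
case: (k + k - n =P 0)%N => [->|/eqP k1] hmu /=; by lia.
Qed.

Lemma PL_bounds n x : (0 < n)%N -> PL n x -> 0 <= x /\ x <= 1.
Proof.
move=> n0 [k [kn ->]]; have N0 : (0:rat) < n%:R by rewrite ltr0n.
split; first by rewrite divr_ge0 ?ler0n.
by rewrite ler_pdivrMr // mul1r ler_nat.
Qed.

Theorem lemma3p11 (n : nat) (R : rat -> rat -> Prop) :
  (1 <= n)%N ->
  subalg2 n R ->
  (forall x y, R x y -> x <= y) ->
  ~ (exists S : rat -> Prop, subalg n S /\ is_diagonal R S) ->
  forall x y, R x y ->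
  forall x' y', Cset (pr1 R) (pr2 R) x y x' y' -> R x' y'.
Proof.
move=> n0 hR2 Rle notdiag x y Rxy x' y' [[y'' Rx'] [x'' Ry'] hx hy].
have N0 : (0:rat) < n%:R by rewrite ltr0n.
have hR2' := hR2; case: hR2' => RPL R00 R11 Rops.
have R01 : R 0 1.
  case: (Classical_Prop.classic (exists a b, R a b /\ a < b)).
    move=> [a [b [Rab ab]]].
    case: (RPL _ _ Rab) => [[k [kn ak]] [l [ln bl]]].
    have kl : (k < l)%N.
      by move: ab; rewrite ak bl ltr_pM2r ?invr_gt0 // ltr_nat.
    apply: (@key n R n0 hR2 (n + n)%N k l); last by rewrite -ak -bl.
      by case: (k == 0%N); lia.
    by rewrite kl.
  move=> nex; exfalso; apply: notdiag; exists (pr1 R).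
  have eqR : forall a b, R a b -> a = b.
    move=> a b Rab; move: (Rle _ _ Rab); rewrite le_eqVlt => /orP [/eqP //|ab].
    by exfalso; apply: nex; exists a, b.
  split.
    split => //; first by move=> a [b Rab]; case: (RPL _ _ Rab).
      by exists 0.
      by exists 1.
    move=> a b [a' Ra] [b' Rb]; have ea := eqR _ _ Ra; have eb := eqR _ _ Rb.
    subst a' b'; case: (Rops _ _ _ _ Ra Rb) => h1 h2 h3 h4.
    by split; [exists (lmeet a b)|exists (ljoin a b)|exists (lodot a b)|exists (loplus a b)].
  move=> a b; split.
    by move=> Rab; split; [exists b | apply: eqR].
  by move=> [[b0 Rab0] <-]; rewrite {2}(eqR _ _ Rab0).
case: (Rops _ _ _ _ Rx' Rxy) => M1 _ _ _.
case: (Rops _ _ _ _ R01 Ry') => M2 _ _ _.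
case: (Rops _ _ _ _ M1 M2) => _ J _ _.
have [x'0 _] := @PL_bounds n _ n0 (proj1 (RPL _ _ Rx')).
have [x''0 _] := @PL_bounds n _ n0 (proj1 (RPL _ _ Ry')).
have [_ y'1] := @PL_bounds n _ n0 (proj2 (RPL _ _ Ry')).
move: J; rewrite /ljoin /lmeet (min_idPl hx) (min_idPl x''0) (max_idPl x'0).
rewrite (min_idPr y'1) (max_idPr _) //.
by rewrite ge_min hy orbT.
Qed.
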